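(* Let $\mu_t,c_t\in(0,1)$ with $(\mu_t-c_t,\mu_t+c_t)\subset(0,1)$, let $\mu_t^*\in[0,1]$, let $\mathcal{A}$ be a set of actions, $a_t\in\mathcal{A}$, and $l_t:\mathcal{A}\times\{0,1\}\to\mathbb{R}$. Define $$L_t^{\max}=\max_{\tilde\mu\in[\mu_t-c_t,\mu_t+c_t]}\mathbb{E}_{Y\sim\mathrm{Bernoulli}(\tilde\mu)}[l_t(a_t,Y)],\qquad L_t^{\min}=\min_{\tilde\mu\in[\mu_t-c_t,\mu_t+c_t]}\mathbb{E}_{Y\sim\mathrm{Bernoulli}(\tilde\mu)}[l_t(a_t,Y)],$$ $L_t^*=\mathbb{E}_{Y\sim\mathrm{Bernoulli}(\mu_t^* )}[l_t(a_t,Y)]$, and for a stake $b_t\in\mathbb{R}$, $$L_t^{\mathrm{pay}}=L_t^*-\mathbb{E}_{Y\sim\mathrm{Bernoulli}(\mu_t^* )}\big[b_t(Y-\mu_t)+|b_t|c_t\big].$$ If $b_t=l_t(a_t,1)-l_t(a_t,0)$, then $L_t^{\mathrm{pay}}\in[L_t^{\min},L_t^{\max}]$. *)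

(* Defs.v *)
From HB Require Import structures.
From mathcomp Require Import all_boot all_order all_algebra.
From mathcomp Require Import all_classical all_reals.
Set Implicit Arguments. Unset Strict Implicit. Unset Printing Implicit Defensive.
Import Order.TTheory GRing.Theory Num.Theory.
Local Open Scope ring_scope.
Local Open Scope classical_set_scope.

(* E_{Y ~ Bernoulli(mu)} [f Y], with Y in {0,1} encoded as bool (true = 1). *)
Definition bernE {R : realType} (mu : R) (f : bool -> R) : R :=
  (1 - mu) * f false + mu * f true.

Definition conf_int {R : realType} (mu c : R) : set R :=
  [set m | mu - c <= m <= mu + c].

(* L^max: max over mu~ in [mu-c, mu+c] of E_{Bern(mu~)}[l(a,Y)]
   (the max is attained since the map is affine; we use sup). *)
Definition Lmax {R : realType} {A : Type} (l : A -> bool -> R) (a : A) (mu c : R) : R :=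
  sup [set bernE m (l a) | m in conf_int mu c].

Definition Lmin {R : realType} {A : Type} (l : A -> bool -> R) (a : A) (mu c : R) : R :=
  inf [set bernE m (l a) | m in conf_int mu c].

Definition Lstar {R : realType} {A : Type} (l : A -> bool -> R) (a : A) (mustar : R) : R :=
  bernE mustar (l a).

Definition Lpay {R : realType} {A : Type} (l : A -> bool -> R) (a : A)
    (mu c mustar b : R) : R :=
  Lstar l a mustar - bernE mustar (fun y : bool => b * ((y : nat)%:R - mu) + `|b| * c).

(* Main.v *)
Require Import Defs.
From HB Require Import structures.
From mathcomp Require Import all_boot all_order all_algebra.
From mathcomp Require Import all_classical all_reals.
From mathcomp Require Import ring lra.
Import Order.TTheory GRing.Theory Num.Theory.
Local Open Scope ring_scope.

Theorem proposition2 (R : realType) (A : Type) (mu c mustar b : R)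
  (l : A -> bool -> R) (a : A)
  (hmu : 0 < mu < 1) (hc : 0 < c < 1)
  (hsub : 0 <= mu - c /\ mu + c <= 1)
  (hstar : 0 <= mustar <= 1)
  (hb : b = l a true - l a false) :
  Lmin l a mu c <= Lpay l a mu c mustar b <= Lmax l a mu c.
Proof.
have Epay : Lpay l a mu c mustar b = l a false + mu * b - `|b| * c.
  by rewrite /Lpay /Lstar /bernE /= hb; ring.
have Em : forall m, bernE m (l a) = l a false + m * b.
  by move=> m; rewrite /bernE hb; ring.
case: hsub => h1 h2.
have bnd : forall m, mu - c <= m <= mu + c ->
   l a false + mu * b - `|b| * c <= bernE m (l a) <= l a false + mu * b + `|b| * c.
  move=> m /andP[m1 m2]; rewrite Em.
  case: (lerP 0 b) => hb0.
    rewrite ger0_norm //; apply/andP; split; nra.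
  rewrite ltr0_norm //; apply/andP; split; nra.
rewrite Epay; apply/andP; split.
  have Hlb : has_lbound [set bernE m (l a) | m in conf_int mu c].
    exists (l a false + mu * b - `|b| * c) => _ [m hm <-].
    by case/andP: (bnd m hm).
  apply: (ge_inf Hlb).
  case: (lerP 0 b) => hb0.
    exists (mu - c); first by rewrite /conf_int /=; apply/andP; split; lra.
    by rewrite Em ger0_norm //; ring.
  exists (mu + c); first by rewrite /conf_int /=; apply/andP; split; lra.
  by rewrite Em ltr0_norm //; ring.
apply: (@le_trans _ _ (bernE mu (l a))).
  rewrite Em; have := normr_ge0 b; nra.
have Hub : has_ubound [set bernE m (l a) | m in conf_int mu c].
  exists (l a false + mu * b + `|b| * c) => _ [m hm <-].
  by case/andP: (bnd m hm).
apply: (ub_le_sup Hub).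
exists mu => //; rewrite /conf_int /=; apply/andP; split; lra.
Qed.
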